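(* Let $f:\mathbb{N}\to\mathbb{R}$ with $f(1)=1$, and suppose $|f|$ is submultiplicative, i.e. $|f(m)|\,|f(n)| \geq |f(mn)|$ for all $m,n\in\mathbb{N}$. Assume there exist $C>0$ and $\gamma\in\mathbb{R}$ such that $|f(n)| \leq C n^\gamma$ for all $n \geq 2$. Then $$|f^{-1}(n)| \leq H(n)\, C^{\Omega(n)} n^{\gamma} \leq C^{\Omega(n)} n^{\gamma+\rho}, \quad n\geq 2,$$ where $\rho=1.72865\dots$ is the unique root $s>1$ of $\zeta(s)=2$.
   Context: The Dirichlet convolution is $(f\ast g)(n)=\sum_{d\mid n} f(n/d)g(d)$; for $f(1)\neq0$, $f^{-1}$ denotes the Dirichlet inverse, the unique arithmetic function with $f\ast f^{-1}=f^{-1}\ast f=\varepsilon$, where $\varepsilon(1)=1$ and $\varepsilon(n)=0$ for $n\ge2$. $\Omega(n)$ is the number of prime factors of $n$ counted with multiplicity. $H(n)$ is the number of ordered factorizations of $n$ into factors $\ge 2$, i.e. $H(n)=\sum_{k\ge1}\#\{(d_1,\dots,d_k): d_1\cdots d_k=n,\ d_i\ge2\}$. $\zeta$ is the Riemann zeta function. *)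

(* Defs.v *)
From HB Require Import structures.
From mathcomp Require Import all_boot all_order all_algebra.
From mathcomp Require Import all_classical all_reals all_analysis.
Set Implicit Arguments. Unset Strict Implicit. Unset Printing Implicit Defensive.
Import Order.TTheory GRing.Theory Num.Theory.
Import numFieldNormedType.Exports.
Local Open Scope ring_scope.

(* Arithmetic functions are maps nat -> R; only values at n >= 1 matter. *)

Definition dconv (R : realType) (f g : nat -> R) (n : nat) : R :=
  \sum_(d <- divisors n) f (n %/ d)%N * g d.

Definition deps (R : realType) (n : nat) : R := (n == 1%N)%:R.

Definition is_dirichlet_inverse (R : realType) (f g : nat -> R) : Prop :=
  forall n : nat, (0 < n)%N ->
    dconv f g n = deps R n /\ dconv g f n = deps R n.

Definition primeOmega (n : nat) : nat := (\sum_(p <- primes n) logn p n)%N.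

(* H(n): number of ordered factorizations n = d_1 ... d_k, k >= 1, d_i >= 2.
   Since each d_i >= 2 divides n, necessarily k <= n and d_i <= n, so the
   sum over k may be restricted to 1 <= k <= n and the factors to 'I_n.+1
   (all other terms are 0; for n = 0 this gives 0, irrelevant here). *)
Definition ordfact (n : nat) : nat :=
  (\sum_(1 <= k < n.+1)
     #|[pred t : k.-tuple 'I_n.+1 |
         all (fun d : 'I_n.+1 => (1 < d)%N) t &&
         ((\prod_(d <- t) (d : nat))%N == n)]|)%N.

Definition zeta_partial (R : realType) (s : R) (N : nat) : R :=
  \sum_(1 <= k < N) (k%:R `^ (- s)).

Definition zeta_eq2 (R : realType) (s : R) : Prop :=
  (zeta_partial s @ \oo --> (2 : R))%classic.

(* Main.v *)
Require Import Defs.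
From HB Require Import structures.
From mathcomp Require Import all_boot all_order all_algebra.
From mathcomp Require Import all_classical all_reals all_analysis.
From mathcomp Require Import zify ring.
Import Order.TTheory GRing.Theory Num.Theory.
Import numFieldNormedType.Exports.

Lemma big_seq_range (R : Type) (idx : R) (op : Monoid.com_law idx)
  (s : seq nat) a B (F : nat -> R) :
  uniq s -> (forall i, i \in s -> (a <= i < B)%N) ->
  \big[op/idx]_(i <- s) F i = \big[op/idx]_(a <= i < B | i \in s) F i.
Proof.
move=> us hs; rewrite -[RHS]big_filter; apply: perm_big.
apply: uniq_perm => //; first by rewrite filter_uniq // iota_uniq.
move=> i; rewrite mem_filter mem_index_iota.
by case his: (i \in s) => //=; rewrite hs.
Qed.

Fixpoint Fk (k m : nat) : nat :=
  match k with
  | 0 => (m == 1)%N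
  | k'.+1 => (\sum_(d <- divisors m | (1 < d)%N) Fk k' (m %/ d))%N
  end.

Definition Hs (m : nat) : nat := (\sum_(0 <= k < m.+1) Fk k m)%N.

Lemma Fk_zero k m : (m < 2 ^ k)%N -> Fk k m = 0%N.
Proof.
elim: k m => [|k IH] m /=.
  by rewrite expn0 ltnS leqn0 => /eqP ->.
move=> hm; rewrite big1_seq // => d /andP [hd _]; apply: IH.
have h2 : (m %/ d <= m %/ 2)%N by apply: leq_div2l.
apply: leq_ltn_trans h2 _; rewrite ltn_divLR //; by rewrite expnS mulnC in hm.
Qed.

Lemma Hs_ext m B : (m.+1 <= B)%N ->
  (\sum_(0 <= k < B) Fk k m)%N = Hs m.
Proof.
move=> hB; rewrite /Hs (@big_cat_nat _ _ _ m.+1) //=.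
rewrite [X in (_ + X)%N]big1_seq ?addn0 // => k /andP [_].
rewrite mem_index_iota => /andP [hk _]; apply: Fk_zero.
exact: (leq_trans hk (ltnW (ltn_expl _ (isT : (1 < 2)%N)))).
Qed.


Lemma FkS k m : Fk k.+1 m = (\sum_(d <- divisors m | (1 < d)%N) Fk k (m %/ d))%N.
Proof. by []. Qed.
Lemma Fk0 m : Fk 0 m = (m == 1)%N.
Proof. by []. Qed.
Lemma Hs_rec n : (2 <= n)%N ->
  Hs n = (\sum_(d <- divisors n | (1 < d)%N) Hs (n %/ d))%N.
Proof.
move=> hn; rewrite /Hs big_nat_recl // Fk0.
have -> : (n == 1)%N = false by case: n hn => [|[|]].
rewrite add0n.
under eq_bigr => i _ do rewrite FkS.
rewrite exchange_big /= big_seq_cond [RHS]big_seq_cond; apply: eq_bigr => d /andP [hdiv hd].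
apply: Hs_ext.
have hn0 : (0 < n)%N by apply: leq_trans hn.
exact: ltn_Pdiv.
Qed.

Lemma Hs1 : Hs 1 = 1%N.
Proof. rewrite /Hs big_nat_recl // big_nat_recl // big_geq // FkS Fk0. rewrite big1_seq // => d /andP [hd]; rewrite -dvdn_divisors // dvdn1 => /eqP hd1. by rewrite hd1 in hd. Qed.


Lemma card_sum (T : finType) (P : pred T) : #|P| = (\sum_(t : T) (P t : nat))%N.
Proof.
rewrite -sum1_card [LHS](big_mkcond (fun i => i \in P) (fun=> 1%N)) /=.
by apply: eq_big.
Qed.

Lemma divisor_sum_ord N m (h : nat -> nat) : (0 < m < N)%N ->
  (\sum_(x : 'I_N) (if (1 < x)%N && (x %| m)%N then h (x : nat) else 0))%N
  = (\sum_(d <- divisors m | (1 < d)%N) h d)%N.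
Proof.
move=> /andP [m0 mN].
rewrite -big_filter (@big_seq_range _ _ _ _ 0 N); last first.
- move=> i; rewrite mem_filter -dvdn_divisors // => /andP [_ hi].
  by rewrite leq0n /=; apply: leq_ltn_trans mN; apply: dvdn_leq.
- by rewrite filter_uniq // divisors_uniq.
rewrite big_mkord [RHS]big_mkcond /=; apply: eq_bigr => x _.
by rewrite mem_filter -dvdn_divisors.
Qed.


Lemma sum_tupleS (T : finType) k (g : k.+1.-tuple T -> nat) :
  (\sum_(t : k.+1.-tuple T) g t = \sum_(x : T) \sum_(t : k.-tuple T) g [tuple of x :: t])%N.
Proof.
rewrite (partition_big (@thead _ _) predT) //=; apply: eq_bigr => x _.
rewrite (reindex (fun t : k.-tuple T => [tuple of x :: t])) /=; last first.
  pose ttail (t : k.+1.-tuple T) := [tuple of behead t].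
  exists ttail => [t _ | t /eqP <-]; first exact: val_inj.
  by rewrite -tuple_eta.
by apply: eq_bigl => t; rewrite theadE eqxx.
Qed.

Lemma card_Fk N k m : (0 < m < N)%N ->
  #|[pred t : k.-tuple 'I_N |
         all (fun d : 'I_N => (1 < d)%N) t &&
         ((\prod_(d <- t) (d : nat))%N == m)]| = Fk k m.
Proof.
elim: k m => [|k IH] m hm; rewrite card_sum.
  rewrite (eq_bigr (fun=> nat_of_bool (m == 1)%N)) => [|t _]; last first.
    by rewrite [t]tuple0 /= big_nil eq_sym.
  by rewrite sum_nat_const card_tuple expn0 mul1n.
rewrite sum_tupleS FkS -(@divisor_sum_ord N) //; apply: eq_bigr => x _.
have [/andP [hx hxm]|hn] := boolP ((1 < x)%N && (x %| m)%N).
  rewrite -IH; last first.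
    case/andP: hm => m0 mN; rewrite divn_gt0 ?(dvdn_leq m0 hxm) //=; last by apply: ltnW.
    by apply: leq_ltn_trans mN; apply: leq_div.
  rewrite card_sum; apply: eq_bigr => t _ /=.
  rewrite big_cons hx /=.
  have x0 : (0 < x)%N by apply: ltnW.
  have e : forall p, (x * p == m)%N = (p == m %/ x)%N.
    by move=> p; rewrite -[in LHS](divnK hxm) [X in _ == X]mulnC eqn_pmul2l.
  by rewrite e.
rewrite big1 // => t _ /=; rewrite big_cons.
case hx: (1 < x)%N => //=.
case ht: (all _ _) => //=.
case: eqP => // hm'; move: hn; rewrite hx /= -hm'.
by rewrite dvdn_mulr.
Qed.

Lemma ordfact_Hs n : (2 <= n)%N -> ordfact n = Hs n.
Proof.
move=> hn; rewrite /ordfact /Hs [in RHS]big_ltn // Fk0.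
have -> : (n == 1)%N = false by case: n hn => [|[|]].
rewrite add0n; apply: eq_bigr => k _; apply: card_Fk.
by rewrite ltnS leqnn andbT; apply: leq_trans hn.
Qed.


Lemma sum_seq_rangeN (s : seq nat) a B (F : nat -> nat) :
  uniq s -> (forall i, i \in s -> (a <= i < B)%N) ->
  (\sum_(i <- s) F i = \sum_(a <= i < B | i \in s) F i)%N.
Proof.
move=> us hs; rewrite -[RHS]big_filter; apply: perm_big.
apply: uniq_perm => //; first by rewrite filter_uniq // iota_uniq.
move=> i; rewrite mem_filter mem_index_iota.
by case his: (i \in s) => //=; rewrite hs.
Qed.

Lemma sum_seq_rangeR (R : realType) (s : seq nat) a B (F : nat -> R) :
  uniq s -> (forall i, i \in s -> (a <= i < B)%N) ->
  (\sum_(i <- s) F i = \sum_(a <= i < B | i \in s) F i)%R.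
Proof.
move=> us hs; rewrite -[RHS]big_filter; apply: perm_big.
apply: uniq_perm => //; first by rewrite filter_uniq // iota_uniq.
move=> i; rewrite mem_filter mem_index_iota.
by case his: (i \in s) => //=; rewrite hs.
Qed.

Lemma Omega_sum n B : (0 < n)%N -> (n < B)%N ->
  primeOmega n = (\sum_(0 <= p < B) logn p n)%N.
Proof.
move=> n0 nB; rewrite /primeOmega (@sum_seq_rangeN _ 0 B); last first.
- move=> p; rewrite mem_primes => /and3P [_ _ hp].
  by rewrite leq0n /=; apply: leq_ltn_trans nB; apply: dvdn_leq.
- exact: primes_uniq.
rewrite [LHS]big_mkcond /=; apply: eq_bigr => p _.
case: ifP => // h; apply/esym/eqP; by rewrite -leqn0 leqNgt logn_gt0 h.
Qed.

Lemma OmegaM a b : (0 < a)%N -> (0 < b)%N ->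
  primeOmega (a * b) = (primeOmega a + primeOmega b)%N.
Proof.
move=> a0 b0.
have ab0 : (0 < a * b)%N by rewrite muln_gt0 a0.
rewrite !(@Omega_sum _ (a * b).+1) //; last first.
- by rewrite ltnS ?leq_pmull ?leq_pmulr.
- by rewrite ltnS ?leq_pmull ?leq_pmulr.
rewrite -big_split /=; apply: eq_bigr => p _; exact: lognM.
Qed.

Lemma Omega_prime p : prime p -> primeOmega p = 1%N.
Proof. by move=> pp; rewrite /primeOmega primes_prime // big_seq1 logn_prime // eqxx. Qed.

Lemma Omega1 : primeOmega 1 = 0%N.
Proof. by rewrite /primeOmega big_nil. Qed.

Section SE.
Local Open Scope ring_scope.

Lemma pow1n (R : realType) (g : R) : (1%:R : R) `^ g = 1.
Proof. by rewrite powR1. Qed.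

Lemma powr_natM (R : realType) (a b : nat) (g : R) :
  ((a * b)%N%:R : R) `^ g = a%:R `^ g * b%:R `^ g.
Proof. by rewrite natrM powRM. Qed.

Lemma fbound (R : realType) (f : nat -> R) (C gamma : R)
  (hf1 : f 1%N = 1)
  (hsub : forall m n : nat, (0 < m)%N -> (0 < n)%N ->
            `|f (m * n)%N| <= `|f m| * `|f n|)
  (hC : 0 < C)
  (hbound : forall n : nat, (2 <= n)%N -> `|f n| <= C * (n%:R `^ gamma)) :
  forall d, (0 < d)%N -> `|f d| <= C ^+ primeOmega d * d%:R `^ gamma.
Proof.
elim/ltn_ind => d IH d0.
have [d1|d2] := leqP d 1.
  have -> : d = 1%N by apply/eqP; rewrite eqn_leq d1 d0.
  by rewrite hf1 Omega1 expr0 pow1n normr1 mul1r.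
pose p := pdiv d.
have pp : prime p by apply: pdiv_prime.
have p0 := prime_gt0 pp.
pose q := (d %/ p)%N.
have dq : d = (q * p)%N by rewrite divnK // pdiv_dvd.
have q0 : (0 < q)%N by rewrite divn_gt0 // pdiv_leq.
have qd : (q < d)%N by apply: ltn_Pdiv => //; apply: prime_gt1.
have IHq := IH q qd q0.
have hp := hbound p (prime_gt1 pp).
clearbody q p; subst d.
rewrite OmegaM // (@Omega_prime p pp) powr_natM addn1 exprSr.
apply: (le_trans (hsub _ _ q0 p0)).
rewrite [X in _ <= X]mulrACA.
apply: ler_pM => //.
Qed.

End SE.

Section SF.
Local Open Scope ring_scope.

Lemma filt_conv (R : realType) n (F : nat -> R) : (0 < n)%N ->
  \sum_(d <- divisors n | d != 1%N) F d = \sum_(d <- divisors n | (1 < d)%N) F d.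
Proof.
move=> n0; rewrite big_seq_cond [RHS]big_seq_cond; apply: eq_bigl => d.
case h: (d \in divisors n) => //=.
have d0 : (0 < d)%N.
  move: h; rewrite -dvdn_divisors //; apply: dvdn_gt0 n0.
by case: d d0 {h} => [|[|d]].
Qed.

Lemma finv1 (R : realType) (f finv : nat -> R) (hf1 : f 1%N = 1)
  (hinv : is_dirichlet_inverse f finv) : finv 1%N = 1.
Proof.
have [_ h] := hinv 1%N isT.
move: h; rewrite /dconv /deps.
have -> : divisors 1 = [:: 1%N] by [].
by rewrite big_seq1 divn1 hf1 mulr1.
Qed.

Lemma finv_rec (R : realType) (f finv : nat -> R) (hf1 : f 1%N = 1)
  (hinv : is_dirichlet_inverse f finv) n : (2 <= n)%N ->
  finv n = - \sum_(d <- divisors n | (1 < d)%N) finv (n %/ d)%N * f d.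
Proof.
move=> hn; have n0 : (0 < n)%N by apply: leq_trans hn.
have [_ h] := hinv n n0.
move: h; rewrite /dconv /deps (bigD1_seq 1%N) ?divisor1 ?divisors_uniq //.
rewrite divn1 hf1 mulr1 filt_conv //.
have -> : (n == 1)%N = false by case: n hn {n0} => [|[|]].
by move/eqP; rewrite addr_eq0 => /eqP.
Qed.

End SF.

Section SG.
Local Open Scope ring_scope.

Lemma finv_bound (R : realType) (f finv : nat -> R) (C gamma : R)
  (hf1 : f 1%N = 1)
  (hsub : forall m n : nat, (0 < m)%N -> (0 < n)%N ->
            `|f (m * n)%N| <= `|f m| * `|f n|)
  (hC : 0 < C)
  (hbound : forall n : nat, (2 <= n)%N -> `|f n| <= C * (n%:R `^ gamma))
  (hinv : is_dirichlet_inverse f finv) :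
  forall n, (0 < n)%N ->
   `|finv n| <= (Hs n)%:R * C ^+ primeOmega n * (n%:R `^ gamma).
Proof.
have fb := @fbound R f C gamma hf1 hsub hC hbound.
elim/ltn_ind => n IH n0.
have [n1|n2] := leqP n 1.
  have -> : n = 1%N by apply/eqP; rewrite eqn_leq n1 n0.
  by rewrite (@finv1 R f finv hf1 hinv) Hs1 Omega1 expr0 pow1n normr1 !mulr1.
rewrite (@finv_rec R f finv hf1 hinv n n2) normrN.
apply: (le_trans (ler_norm_sum _ _ _)).
rewrite (@Hs_rec n n2) natr_sum !mulr_suml.
rewrite big_seq_cond [X in _ <= X]big_seq_cond.
apply: ler_sum => d /andP [hd d1].
have hdn : (d %| n)%N by rewrite dvdn_divisors.
have d0 : (0 < d)%N by apply: ltnW.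
pose q := (n %/ d)%N.
have nq : n = (q * d)%N by rewrite divnK.
have q0 : (0 < q)%N by rewrite divn_gt0 // dvdn_leq.
have qn : (q < n)%N by apply: ltn_Pdiv.
have IHq := IH q qn q0.
have fd := fb d d0.
rewrite -/q; clearbody q; subst n.
rewrite normrM OmegaM // powr_natM exprD.
have -> : (Hs q)%:R * (C ^+ primeOmega q * C ^+ primeOmega d) *
    (q%:R `^ gamma * d%:R `^ gamma) =
    ((Hs q)%:R * C ^+ primeOmega q * q%:R `^ gamma) * (C ^+ primeOmega d * d%:R `^ gamma) by ring.
apply: ler_pM => //.
Qed.

End SG.

Section SH.
Local Open Scope ring_scope.

Lemma zeta_le2 (R : realType) (rho : R) (hrho : zeta_eq2 rho) N :
  zeta_partial rho N <= 2.
Proof.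
have hom : {homo zeta_partial rho : n m / (n <= m)%N >-> n <= m}.
  move=> m n mn; rewrite /zeta_partial.
  case: m mn => [|m] mn.
    by rewrite big_geq // sumr_ge0 // => k _; exact: powR_ge0.
  rewrite [X in _ <= X](@big_cat_nat _ _ _ m.+1) //=.
  by rewrite lerDl sumr_ge0 // => k _; exact: powR_ge0.
move: (hrho); rewrite /zeta_eq2 => hr.
have := nondecreasing_cvgn_le hom (cvgP _ hr) N.
by rewrite (norm_cvg_lim hr).
Qed.

Lemma divsum_le1 (R : realType) (rho : R) (hrho : zeta_eq2 rho) n : (0 < n)%N ->
  \sum_(d <- divisors n | (1 < d)%N) d%:R `^ (- rho) <= 1.
Proof.
move=> n0.
have hz := @zeta_le2 R rho hrho n.+1.
rewrite /zeta_partial big_ltn // pow1n in hz.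
have hs : \sum_(2 <= k < n.+1) (k%:R : R) `^ (- rho) <= 1.
  by move: hz; rewrite addrC -lerBrDr; have -> : (2 - 1 : R) = 1 by ring.
apply: le_trans hs.
rewrite -big_filter (@sum_seq_rangeR _ _ 2 n.+1); last first.
- move=> i; rewrite mem_filter -dvdn_divisors // => /andP [hi hd].
  by rewrite hi /= ltnS; apply: dvdn_leq.
- by rewrite filter_uniq // divisors_uniq.
rewrite big_mkcond /=; apply: ler_sum => k _.
by case: ifP => // _; exact: powR_ge0.
Qed.

Lemma Hs_bound (R : realType) (rho : R) (hrho : zeta_eq2 rho) :
  forall n, (0 < n)%N -> (Hs n)%:R <= (n%:R : R) `^ rho.
Proof.
elim/ltn_ind => n IH n0.
have [n1|n2] := leqP n 1.
  have -> : n = 1%N by apply/eqP; rewrite eqn_leq n1 n0.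
  by rewrite Hs1 pow1n.
rewrite (@Hs_rec n n2) natr_sum.
apply: (@le_trans _ _ (\sum_(d <- divisors n | (1 < d)%N) (n%:R : R) `^ rho * d%:R `^ (- rho))).
  rewrite big_seq_cond [X in _ <= X]big_seq_cond.
  apply: ler_sum => d /andP [hd d1].
  have hdn : (d %| n)%N by rewrite dvdn_divisors.
  have d0 : (0 < d)%N by apply: ltnW.
  pose q := (n %/ d)%N.
  have nq : n = (q * d)%N by rewrite divnK.
  have q0 : (0 < q)%N by rewrite divn_gt0 // dvdn_leq.
  have qn : (q < n)%N by apply: ltn_Pdiv.
  have IHq := IH q qn q0.
  rewrite -/q; clearbody q; subst n.
  rewrite powr_natM powRN -mulrA mulfV ?mulr1 //.
  by apply: lt0r_neq0; apply: powR_gt0; rewrite ltr0n.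
rewrite -mulr_sumr.
rewrite -[X in _ <= X]mulr1; apply: ler_wpM2l; first exact: powR_ge0.
exact: (@divsum_le1 R rho hrho n n0).
Qed.

End SH.


Local Open Scope ring_scope.

Theorem proposition3p1 (R : realType) (f finv : nat -> R) (C gamma rho : R)
  (hf1 : f 1%N = 1)
  (hsub : forall m n : nat, (0 < m)%N -> (0 < n)%N ->
            `|f (m * n)%N| <= `|f m| * `|f n|)
  (hC : 0 < C)
  (hbound : forall n : nat, (2 <= n)%N -> `|f n| <= C * (n%:R `^ gamma))
  (hinv : is_dirichlet_inverse f finv)
  (hrho1 : 1 < rho)
  (hrho : zeta_eq2 rho) :
  forall n : nat, (2 <= n)%N ->
    `|finv n| <= (ordfact n)%:R * C ^+ primeOmega n * (n%:R `^ gamma) /\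
    (ordfact n)%:R * C ^+ primeOmega n * (n%:R `^ gamma)
      <= C ^+ primeOmega n * (n%:R `^ (gamma + rho)).
Proof.
move=> n hn; have n0 : (0 < n)%N by apply: leq_trans hn.
rewrite (@ordfact_Hs n hn); split.
  exact: (@finv_bound R f finv C gamma hf1 hsub hC hbound hinv n n0).
rewrite powRD; last by rewrite pnatr_eq0 -lt0n n0 implybT.
have -> : (Hs n)%:R * C ^+ primeOmega n * n%:R `^ gamma =
  (C ^+ primeOmega n * n%:R `^ gamma) * (Hs n)%:R by ring.
rewrite mulrA; apply: ler_wpM2l.
  by apply: mulr_ge0; [apply: exprn_ge0; apply: ltW | apply: powR_ge0].
exact: (@Hs_bound R rho hrho n n0).
Qed.
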